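(* Let $m\ge1$, let $\mathcal{I}\subseteq\mathcal{M}_m$ be a decreasing monomial set, and let $f=x_{i_1}x_{i_2}$ ($i_1<i_2$) and $g=x_{j_1}x_{j_2}$ ($j_1<j_2$) be monomials with $\gcd(f,g)=1$ and $i_2>j_2$. Then \[ |{\rm LTA}(m,2)\cdot f+{\rm LTA}(m,2)\cdot g|=\frac{|{\rm LTA}(m,2)\cdot f|\cdot |{\rm LTA}(m,2)\cdot g|}{2^{\alpha_{f,g}}}. \]
   Context: $\mathbf{R}_m=\mathbb{F}_2[x_0,\dots,x_{m-1}]/(x_0^2-x_0,\dots,x_{m-1}^2-x_{m-1})$; $\mathcal{M}_m$ is the set of monomials $x_0^{i_0}\cdots x_{m-1}^{i_{m-1}}$, $i_j\in\{0,1\}$; $\gcd$ of monomials is the monomial on the common variables. Order: $f\preceq_w g$ iff every variable of $f$ divides $g$; for equal-degree $f=x_{i_1}\cdots x_{i_s}$, $g=x_{j_1}\cdots x_{j_s}$ (increasing indices), $f\preceq_{sh}g$ iff $i_\ell\le j_\ell$ for all $\ell$; $f\preceq g$ iff $f\preceq_{sh}g^*\preceq_w g$ for some $g^*$; $\mathcal{I}$ is decreasing if $f\in\mathcal{I}$, $g\preceq f$ imply $g\in\mathcal{I}$. ${\rm LTA}(m,2)$ is the set of pairs $(\mathbf{B},\varepsilon)$ with $\mathbf{B}=(b_{i,j})\in\mathbb{F}_2^{m\times m}$ lower triangular with ones on the diagonal and $\varepsilon\in\mathbb{F}_2^m$; for a monomial $u$, $(\mathbf{B},\varepsilon)\cdot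 u\in\mathbf{R}_m$ is obtained by replacing each variable $x_i$ of $u$ by $x_i+\sum_{j<i}b_{i,j}x_j+\varepsilon_i$, and ${\rm LTA}(m,2)\cdot u$ is the set of all such polynomials. For sets $\mathcal{S},\mathcal{T}\subseteq\mathbf{R}_m$, $\mathcal{S}+\mathcal{T}=\{s+t:s\in\mathcal{S},t\in\mathcal{T}\}$. The degree of collision is $\alpha_{f,g}=0$ if $i_2>i_1>j_2>j_1$, $1$ if $i_2>j_2>i_1>j_1$, and $2$ if $i_2>j_2>j_1>i_1$. *)

(* Defs.v *)
From HB Require Import structures.
From mathcomp Require Import all_boot all_order all_algebra.
Set Implicit Arguments. Unset Strict Implicit. Unset Printing Implicit Defensive.
Import GRing.Theory.

(* R_m = F_2[x_0..x_{m-1}]/(x_i^2 - x_i) is represented through its monomial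
   basis: a monomial is the set of its variables ({set 'I_m}), an element of
   R_m is the (finite) set of monomials having coefficient 1. *)
Definition monom (m : nat) := {set 'I_m}.
Definition Rm (m : nat) := {set {set 'I_m}}.

Section Ring.
Variable m : nat.
Definition radd (p q : Rm m) : Rm m := (p :|: q) :\: (p :&: q).
Definition rzero : Rm m := set0.
Definition rone : Rm m := [set set0].
Definition rvar (i : 'I_m) : Rm m := [set [set i]].
Definition rconst (c : 'F_2) : Rm m := if c == 1%R then rone else rzero.
(* product: (x^a)(x^b) = x^(a ∪ b) since x_i^2 = x_i *)
Definition rmul (p q : Rm m) : Rm m :=
  \big[radd/rzero]_(a in p) \big[radd/rzero]_(b in q) [set a :|: b].

(* gcd of monomials: monomial on the common variables; 1 is the empty monomial *)
Definition mgcd (f g : monom m) : monom m := f :&: g.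

Definition mindices (f : monom m) : seq nat := sort leq (map val (enum f)).
Definition prec_w (f g : monom m) : bool := f \subset g.
Definition prec_sh (f g : monom m) : bool :=
  (#|f| == #|g|) &&
  [forall k : 'I_m, (k < #|f|) ==> (nth 0 (mindices f) k <= nth 0 (mindices g) k)].
Definition prec (f g : monom m) : Prop :=
  exists gs : monom m, prec_sh f gs /\ prec_w gs g.
Definition decreasing (I : {set monom m}) : Prop :=
  forall f g : monom m, f \in I -> prec g f -> g \in I.

Definition lta_var (B : 'M['F_2]_m) (e : 'rV['F_2]_m) (i : 'I_m) : Rm m :=
  radd (radd (rvar i) (\big[radd/rzero]_(j : 'I_m | j < i) rmul (rconst (B i j)) (rvar j)))
       (rconst (e ord0 i)).

Definition lta_act (B : 'M['F_2]_m) (e : 'rV['F_2]_m) (u : monom m) : Rm m :=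
  \big[rmul/rone]_(i in u) lta_var B e i.

Definition lta_orbit (u : monom m) : {set Rm m} :=
  [set lta_act BE.1 BE.2 u | BE in [set BE : 'M['F_2]_m * 'rV['F_2]_m |
      [forall i : 'I_m, BE.1 i i == 1%R] &&
      [forall i : 'I_m, forall j : 'I_m, (i < j) ==> (BE.1 i j == 0%R)]]].

Definition sumset (S T : {set Rm m}) : {set Rm m} :=
  [set radd st.1 st.2 | st in [set st : Rm m * Rm m | (st.1 \in S) && (st.2 \in T)]].
End Ring.

Definition mono2 (m : nat) (i j : 'I_m) : monom m := [set i; j].

(* degree of collision alpha_{f,g} for f = x_{i1}x_{i2}, g = x_{j1}x_{j2};
   cases: i2>i1>j2>j1 -> 0 ; i2>j2>i1>j1 -> 1 ; i2>j2>j1>i1 -> 2 *)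
Definition alpha (i1 i2 j1 j2 : nat) : nat :=
  if (j2 < i1) then 0 else if (j1 < i1) then 1 else 2.

(* Main.v *)
Require Import Defs.
From HB Require Import structures.
From mathcomp Require Import all_boot all_order all_algebra.
From mathcomp Require Import zify.
Set Implicit Arguments. Unset Strict Implicit. Unset Printing Implicit Defensive.


Section Ev.
Variable m : nat.
Implicit Types p q r : Rm m.

Lemma bigUx (T : finType) (A B : {set T}) (F : T -> bool) :
  [disjoint A & B] ->
  \big[addb/false]_(i in A :|: B) F i =
  (\big[addb/false]_(i in A) F i) (+) (\big[addb/false]_(i in B) F i).
Proof. by move=> D; rewrite -bigU //; apply: eq_bigl => i; rewrite !inE. Qed.

Definition evx (x : {set 'I_m}) p : bool := \big[addb/false]_(a in p) (a \subset x).

Lemma evx_radd x p q : evx x (radd p q) = evx x p (+) evx x q.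
Proof.
rewrite /evx /radd.
have E1 : p = (p :\: q) :|: (p :&: q).
  by apply/setP => a; rewrite !inE; case: (a \in p); case: (a \in q).
have E2 : q = (q :\: p) :|: (p :&: q).
  by apply/setP => a; rewrite !inE; case: (a \in p); case: (a \in q).
have E3 : (p :|: q) :\: (p :&: q) = (p :\: q) :|: (q :\: p).
  by apply/setP => a; rewrite !inE; case: (a \in p); case: (a \in q).
have D1 : [disjoint p :\: q & p :&: q].
  by rewrite -setI_eq0; apply/eqP/setP => a; rewrite !inE; case: (a \in p); case: (a \in q).
have D2 : [disjoint q :\: p & p :&: q].
  by rewrite -setI_eq0; apply/eqP/setP => a; rewrite !inE; case: (a \in p); case: (a \in q).
have D3 : [disjoint p :\: q & q :\: p].
  by rewrite -setI_eq0; apply/eqP/setP => a; rewrite !inE; case: (a \in p); case: (a \in q).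
have H1 : \big[addb/false]_(a in p) (a \subset x) =
  \big[addb/false]_(a in p :\: q) (a \subset x) (+) \big[addb/false]_(a in p :&: q) (a \subset x).
  by rewrite {1}E1 bigUx.
have H2 : \big[addb/false]_(a in q) (a \subset x) =
  \big[addb/false]_(a in q :\: p) (a \subset x) (+) \big[addb/false]_(a in p :&: q) (a \subset x).
  by rewrite {1}E2 bigUx.
rewrite E3 bigUx // H1 H2.
case: (\big[addb/false]_(i in p :\: q) (i \subset x));
case: (\big[addb/false]_(i in q :\: p) (i \subset x));
case: (\big[addb/false]_(i in p :&: q) (i \subset x)) => //.
Qed.

Lemma evx0 x : evx x (rzero m) = false.
Proof. by rewrite /evx /rzero big_set0. Qed.

Lemma evx1 x : evx x (rone m) = true.
Proof. by rewrite /evx /rone big_set1 sub0set. Qed.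

Lemma evx_var x i : evx x (rvar i) = (i \in x).
Proof. by rewrite /evx /rvar big_set1 sub1set. Qed.

Lemma evx_const x (c : 'F_2) : evx x (rconst m c) = (c == 1%R).
Proof. by rewrite /rconst; case: (c == 1%R); rewrite ?evx1 ?evx0. Qed.

Lemma big_addb_andl (I : Type) (r : seq I) (P : pred I) (F : I -> bool) c :
  \big[addb/false]_(i <- r | P i) (c && F i) = c && \big[addb/false]_(i <- r | P i) F i.
Proof. by case: c => //; rewrite big1. Qed.

Lemma big_addb_andr (I : Type) (r : seq I) (P : pred I) (F : I -> bool) c :
  \big[addb/false]_(i <- r | P i) (F i && c) = (\big[addb/false]_(i <- r | P i) F i) && c.
Proof.
case: c; last by rewrite andbF big1 // => i _; rewrite andbF.
by rewrite andbT; apply: eq_bigr => i _; rewrite andbT.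
Qed.

Lemma evx_big x (I : Type) (r : seq I) (P : pred I) (F : I -> Rm m) :
  evx x (\big[@radd m/rzero m]_(i <- r | P i) F i) = \big[addb/false]_(i <- r | P i) evx x (F i).
Proof. by apply: (big_morph (evx x) (evx_radd x) (evx0 x)). Qed.

Lemma evx_rmul x p q : evx x (rmul p q) = evx x p && evx x q.
Proof.
rewrite /rmul evx_big.
rewrite {2}/evx -big_addb_andr; apply: eq_bigr => a _.
rewrite (evx_big x) /evx -big_addb_andl; apply: eq_bigr => b _.
by rewrite big_set1 subUset.
Qed.

Lemma evx_bigmul x (I : Type) (r : seq I) (P : pred I) (F : I -> Rm m) :
  evx x (\big[@rmul m/rone m]_(i <- r | P i) F i) = \big[andb/true]_(i <- r | P i) evx x (F i).
Proof. by apply: (big_morph (evx x) (evx_rmul x) (evx1 x)). Qed.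

Lemma evx_inj p q : (forall x, evx x p = evx x q) -> p = q.
Proof.
move=> H.
have Hr : forall x, evx x (radd p q) = false by move=> x; rewrite evx_radd H addbb.
have E : radd p q = set0.
  case: (set_0Vmem (radd p q)) => [//|[a0 Ha0]].
  case: (arg_minnP (fun a : {set 'I_m} => #|a|) Ha0) => a Ha Hmin.
  have := Hr a; rewrite /evx (bigD1 a) //= subxx big1 //.
  move=> b /andP [Hb Hba]; apply/negP => Hsub.
  have : b \proper a by rewrite properEneq Hba Hsub.
  by move/proper_card; rewrite ltnNge Hmin.
apply/setP => a; move/setP: E => /(_ a); rewrite /radd !inE.
by case: (a \in p); case: (a \in q).
Qed.

Definition ev p : {ffun {set 'I_m} -> bool} := [ffun x => evx x p].

Lemma ev_inj : injective ev.
Proof. by move=> p q E; apply: evx_inj => x; move/ffunP: E => /(_ x); rewrite !ffunE. Qed.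

End Ev.


Section Aff.
Variable m : nat.
Definition Aff := ({ffun 'I_m -> bool} * bool)%type.
Implicit Types L M N : Aff.
Implicit Types i k : 'I_m.

Definition aval L (x : {set 'I_m}) : bool := L.2 (+) \big[addb/false]_(j in x) L.1 j.
Definition aadd L M : Aff := ([ffun j => L.1 j (+) M.1 j], L.2 (+) M.2).
Definition ascale (b : bool) L : Aff := ([ffun j => b && L.1 j], b && L.2).
Definition aone : Aff := ([ffun j => false], true).
Definition tg (x : {set 'I_m}) k := if k \in x then x :\ k else k |: x.

Lemma avalD L M x : aval (aadd L M) x = aval L x (+) aval M x.
Proof.
rewrite /aval /=.
rewrite (eq_bigr (fun j => L.1 j (+) M.1 j)); last by move=> j _; rewrite ffunE.
rewrite big_split /=.
by case: L.2; case: M.2; case: (\big[addb/false]_(i in x) L.1 i);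
  case: (\big[addb/false]_(i in x) M.1 i).
Qed.

Lemma avalZ b L x : aval (ascale b L) x = b && aval L x.
Proof.
rewrite /aval /=; case: b => /=.
  by congr (_ (+) _); apply: eq_bigr => j _; rewrite ffunE.
by rewrite big1 // => j _; rewrite ffunE.
Qed.

Lemma aval1 x : aval aone x = true.
Proof. by rewrite /aval /= big1 // => j _; rewrite ffunE. Qed.

Lemma aval_tg L x k : aval L (tg x k) = aval L x (+) L.1 k.
Proof.
rewrite /aval /tg; case: ifP => Hk.
  rewrite [in RHS](big_setD1 _ Hk).
  by case: L.2; case: (L.1 k); case: (\big[addb/false]_(i in x :\ k) L.1 i).
rewrite big_setU1 ?Hk //.
by case: L.2; case: (L.1 k); case: (\big[addb/false]_(i in x) L.1 i).
Qed.

Lemma aval_inj L M : (forall x, aval L x = aval M x) -> L = M.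
Proof.
case: L => v c; case: M => v' c' H.
have Hc : c = c'.
  by move: (H set0); rewrite /aval /= !big_set0 !addbF.
rewrite -Hc; rewrite -Hc in H; clear Hc; congr pair; apply/ffunP => k.
move: (H [set k]); clear H; rewrite /aval /= !big_set1.
by case: c; case: (v k); case: (v' k).
Qed.

Definition inD (i : 'I_m) L := [forall j : 'I_m, (i <= j) ==> (L.1 j == (j == i))].
Definition low (i : 'I_m) L := [forall j : 'I_m, (i <= j) ==> ~~ L.1 j].

Lemma inD_i i L : inD i L -> L.1 i = true.
Proof. by move/forallP => /(_ i); rewrite leqnn eqxx /= => /eqP. Qed.

Lemma inD_hi i L (j : 'I_m) : inD i L -> i < j -> L.1 j = false.
Proof.
move/forallP => /(_ j) H lt; move: H; rewrite (ltnW lt) /=.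
have -> : (j == i) = false by apply/negbTE; rewrite neq_ltn lt orbT.
by move/eqP.
Qed.

Lemma low_add i L M : low i L -> low i M -> low i (aadd L M).
Proof.
move=> /forallP HL /forallP HM; apply/forallP => j; apply/implyP => Hj.
by rewrite ffunE; move: (HL j) (HM j); rewrite Hj /= => /negbTE -> /negbTE ->.
Qed.

Lemma low_scale i b L : low i L -> low i (ascale b L).
Proof.
move=> /forallP HL; apply/forallP => j; apply/implyP => Hj.
by rewrite ffunE; move: (HL j); rewrite Hj /= => /negbTE ->; rewrite andbF.
Qed.

Lemma low_one i : low i aone.
Proof. by apply/forallP => j; rewrite ffunE implybT. Qed.

Lemma inD_low k i L : inD k L -> k < i -> low i L.
Proof.
move=> H lt; apply/forallP => j; apply/implyP => Hj.
by rewrite (inD_hi H) // (leq_trans lt Hj).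
Qed.

Lemma inD_add i L M : inD i L -> low i M -> inD i (aadd L M).
Proof.
move=> /forallP HL /forallP HM; apply/forallP => j; apply/implyP => Hj.
by rewrite ffunE; move: (HL j) (HM j); rewrite Hj /= => /eqP -> /negbTE ->; rewrite addbF.
Qed.

Lemma Zlem i L N : inD i L -> (forall z, aval L z && aval N z = false) ->
  forall z, aval N z = N.1 i && ~~ aval L z.
Proof.
move=> HL H z; move: (H z) (H (tg z i)); rewrite !aval_tg (inD_i HL).
by case: (aval L z); case: (aval N z); case: (N.1 i).
Qed.

Definition pval (L : Aff * Aff) x := aval L.1 x && aval L.2 x.

Lemma pval_tg (L : Aff * Aff) x k : pval L (tg x k) =
  pval L x (+) (L.1.1 k && aval L.2 x) (+) (L.2.1 k && aval L.1 x) (+) (L.1.1 k && L.2.1 k).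
Proof.
rewrite /pval !aval_tg.
by case: (aval L.1 x); case: (aval L.2 x); case: (L.1.1 k); case: (L.2.1 k).
Qed.

End Aff.


Section Fib.
Variable m : nat.
Local Notation Aff := (Aff m).
Implicit Types L M N : Aff.
Implicit Types i k a b : 'I_m.
Definition T4 := ((Aff * Aff) * (Aff * Aff))%type.

Definition Pv (X : T4) x := pval X.1 x (+) pval X.2 x.
Definition Pfun (X : T4) : {ffun {set 'I_m} -> bool} := [ffun x => Pv X x].
Definition prodf (X : Aff * Aff) : {ffun {set 'I_m} -> bool} := [ffun x => pval X x].
Definition D2 i k : {set Aff * Aff} := setX [set L | inD i L] [set L | inD k L].
Definition D4 i1 i2 j1 j2 : {set T4} := setX (D2 i1 i2) (D2 j1 j2).

Definition mv (X : T4) (t : bool * bool * bool * bool) : T4 :=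
  let s := t.1.1.1 in let p := t.1.1.2 in let q := t.1.2 in let r := t.2 in
  let L1 := X.1.1 in let L2 := X.1.2 in let L3 := X.2.1 in let L4 := X.2.2 in
  let L4' := aadd L4 (aadd (ascale p (aadd L3 (aone m))) (ascale q L1)) in
  ((L1, aadd L2 (aadd (ascale s L4') (aadd (ascale q L3) (ascale r (aadd L1 (aone m)))))),
   (aadd L3 (ascale s L1), L4')).

Definition mv2 (X : Aff * Aff) (r : bool) : Aff * Aff :=
  (X.1, aadd X.2 (ascale r (aadd X.1 (aone m)))).

Lemma Pv_mv X t x : Pv (mv X t) x = Pv X x.
Proof.
case: X => [[L1 L2] [L3 L4]]; case: t => [[[s p] q] r].
rewrite /Pv /pval /mv /= !(avalD, avalZ, aval1).
by case: (aval L1 x); case: (aval L2 x); case: (aval L3 x); case: (aval L4 x);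
  case: s; case: p; case: q; case: r.
Qed.

Lemma pval_mv2 X r x : pval (mv2 X r) x = pval X x.
Proof.
case: X => L1 L2; rewrite /pval /mv2 /= !(avalD, avalZ, aval1).
by case: (aval L1 x); case: (aval L2 x); case: r.
Qed.

Lemma low_scale0 i L : low i (ascale false L).
Proof. by apply/forallP => j; rewrite ffunE /= implybT. Qed.

Lemma inD_mem i k (X : Aff * Aff) : (X \in D2 i k) = inD i X.1 && inD k X.2.
Proof. by rewrite /D2 !inE. Qed.

Lemma D4_mem i1 i2 j1 j2 (X : T4) : (X \in D4 i1 i2 j1 j2) =
  [&& inD i1 X.1.1, inD i2 X.1.2, inD j1 X.2.1 & inD j2 X.2.2].
Proof. by rewrite /D4 /D2 !inE !andbA. Qed.

Lemma mv_dom i1 i2 j1 j2 X (t : bool * bool * bool * bool) : X \in D4 i1 i2 j1 j2 ->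
  i1 < i2 -> j1 < j2 -> j2 < i2 ->
  (t.1.1.1 -> i1 < j1) -> (t.1.2 -> i1 < j2) -> mv X t \in D4 i1 i2 j1 j2.
Proof.
case: X => [[L1 L2] [L3 L4]]; case: t => [[[s p] q] r].
rewrite !D4_mem /= => /and4P [H1 H2 H3 H4] hi hj hij Hs Hq.
have lj1i2 : j1 < i2 by apply: ltn_trans hij.
have H4' : inD j2 (aadd L4 (aadd (ascale p (aadd L3 (aone m))) (ascale q L1))).
  apply: inD_add => //; apply: low_add.
    by apply: low_scale; apply: low_add; [apply: inD_low H3 hj | apply: low_one].
  by case: q Hq => [Hq|_]; [apply: low_scale; apply: inD_low H1 (Hq isT) | apply: low_scale0].
apply/and4P; split => //.
- apply: inD_add => //; apply: low_add.
    by case: s {Hs}; [apply: low_scale; apply: inD_low H4' hij | apply: low_scale0].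
  apply: low_add; first by apply: low_scale; apply: inD_low H3 lj1i2.
  by apply: low_scale; apply: low_add; [apply: inD_low H1 hi | apply: low_one].
- apply: inD_add => //.
  by case: s Hs => [Hs|_]; [apply: low_scale; apply: inD_low H1 (Hs isT) | apply: low_scale0].
Qed.


Lemma mv_inj i1 i2 j1 j2 X : X \in D4 i1 i2 j1 j2 -> i1 != j1 -> injective (mv X).
Proof.
case: X => [[L1 L2] [L3 L4]]; rewrite D4_mem /= => /and4P [H1 H2 H3 H4] hne.
have c0 : (L1.1 j1 && L3.1 i1) = false.
  case: (ltngtP i1 j1) => h.
  - by rewrite (inD_hi H1 h).
  - by rewrite (inD_hi H3 h) andbF.
  - by move: hne; rewrite (val_inj h) eqxx.
move=> [[[s p] q] r] [[[s' p'] q'] r'] E.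
have e1 := congr1 (fun Y : T4 => Y.2.1.1 i1) E.
move: e1; rewrite /= !ffunE /= (inD_i H1) !andbT => /addbI es; subst s'.
have e2 := congr1 (fun Y : T4 => Y.2.2.1 j1) E.
have e3 := congr1 (fun Y : T4 => Y.2.2.1 i1) E.
move: e2 e3; rewrite /= !ffunE /= (inD_i H1) (inD_i H3) !addbF => /addbI e2 /addbI e3.
have [ep eq] : p = p' /\ q = q'.
  by move: e2 e3 c0; clear E; case: (L1.1 j1); case: (L3.1 i1); case: p; case: p'; case: q; case: q'.
subst p' q'.
have e4 := congr1 (fun Y : T4 => Y.1.2.1 i1) E.
move: e4; rewrite /= !ffunE /= (inD_i H1) /= => /addbI/addbI/addbI; rewrite !andbT => ->.
by [].
Qed.

Lemma mv2_inj (a b : 'I_m) (X : Aff * Aff) : X \in D2 a b -> injective (mv2 X).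
Proof.
case: X => L1 L2; rewrite inD_mem /= => /andP [H1 H2] r r' E.
have e := congr1 (fun Y : Aff * Aff => Y.2.1 a) E.
by move: e; rewrite /= !ffunE /= (inD_i H1) /= !andbT => /addbI.
Qed.


Ltac bcase := repeat match goal with |- context [aval ?L ?z] => case: (aval L z) end.

Lemma rec2 (a b : 'I_m) (X Y : Aff * Aff) : a < b -> X \in D2 a b -> Y \in D2 a b ->
  (forall z, pval Y z = pval X z) -> exists r, Y = mv2 X r.
Proof.
case: X => L1 L2; case: Y => M1 M2; rewrite !inD_mem /= => ab /andP [H1 H2] /andP [G1 G2] H.
have E1 : M1 = L1.
  apply: aval_inj => z; move: (H z) (H (tg z b)); rewrite !pval_tg /=.
  rewrite (inD_hi H1 ab) (inD_hi G1 ab) (inD_i H2) (inD_i G2) /pval /=.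
  by bcase.
subst M1.
pose Nf := aadd M2 L2.
have Z' : forall z, aval Nf z = Nf.1 a && ~~ aval L1 z.
  by apply: (Zlem H1) => z; move: (H z); rewrite /pval /Nf avalD /=; bcase.
exists (Nf.1 a); rewrite /mv2 /=; congr pair; apply: aval_inj => z.
move: (Z' z); rewrite /Nf !(avalD, avalZ, aval1).
by case: (Nf.1 a); bcase.
Qed.


Ltac bcase2 := repeat match goal with
  | |- context [aval ?L ?z] => case: (aval L z)
  | |- context [@fun_of_fin ?A ?B ?f ?j] => case: (@fun_of_fin A B f j)
  end.

Lemma rec_a2 (i1 i2 j1 j2 : 'I_m) (X Y : T4) : i1 < j1 -> j1 < j2 -> j2 < i2 ->
  X \in D4 i1 i2 j1 j2 -> Y \in D4 i1 i2 j1 j2 ->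
  (forall z, Pv Y z = Pv X z) -> exists t, Y = mv X t.
Proof.
case: X => [[L1 L2] [L3 L4]]; case: Y => [[M1 M2] [M3 M4]].
rewrite !D4_mem /= => h1 h2 h3 /and4P [H1 H2 H3 H4] /and4P [G1 G2 G3 G4] H.
have i1j2 : i1 < j2 by apply: ltn_trans h2.
have i1i2 : i1 < i2 by apply: ltn_trans h3.
have j1i2 : j1 < i2 by apply: ltn_trans h3.
have E1 : M1 = L1.
  apply: aval_inj => z; move: (H z) (H (tg z i2)); rewrite /Pv !pval_tg /=.
  rewrite (inD_hi H1 i1i2) (inD_hi G1 i1i2) (inD_i H2) (inD_i G2).
  rewrite (inD_hi H3 j1i2) (inD_hi G3 j1i2) (inD_hi H4 h3) (inD_hi G4 h3) /pval /=.
  by bcase.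
subst M1.
pose s := L2.1 j2 (+) M2.1 j2.
have E3 : forall z, aval M3 z = aval L3 z (+) (s && aval L1 z).
  move=> z; move: (H z) (H (tg z j2)); rewrite /Pv !pval_tg /=.
  rewrite (inD_hi H1 i1j2) (inD_hi H3 h2) (inD_hi G3 h2) (inD_i H4) (inD_i G4) /pval /s /=.
  by bcase2.
pose p := L4.1 j1 (+) M4.1 j1.
pose q := L2.1 j1 (+) M2.1 j1 (+) (M4.1 j1 && s).
have E4 : forall z, aval M4 z = aval L4 z (+) (p && ~~ aval L3 z) (+) (q && aval L1 z).
  move=> z; move: (H z) (H (tg z j1)); rewrite /Pv !pval_tg /=.
  rewrite (inD_hi H1 h1) (inD_i H3) (inD_i G3) /pval /= !E3 /p /q /s.
  by bcase2.
pose Nf := aadd M2 (aadd L2 (aadd (ascale s M4) (ascale q L3))).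
have Z : forall z, aval Nf z = Nf.1 i1 && ~~ aval L1 z.
  apply: (Zlem H1) => z; move: (H z); rewrite /Pv /pval /Nf /= E3 !(avalD, avalZ) E4.
  by case: (s); case: (p); case: (q); bcase.
exists (s, p, q, Nf.1 i1); rewrite /mv /=.
have EM4 : M4 = aadd L4 (aadd (ascale p (aadd L3 (aone m))) (ascale q L1)).
  by apply: aval_inj => z; rewrite E4 !(avalD, avalZ, aval1); case: (p); case: (q); bcase.
rewrite -EM4; congr ((_, _), (_, _)).
- apply: aval_inj => z; move: (Z z); set r := Nf.1 i1; rewrite /Nf !(avalD, avalZ, aval1).
  by case: (r); case: (s); case: (q); bcase.
- by apply: aval_inj => z; rewrite E3 !(avalD, avalZ).
Qed.


Lemma rec_a1 (i1 i2 j1 j2 : 'I_m) (X Y : T4) : j1 < i1 -> i1 < j2 -> j2 < i2 ->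
  X \in D4 i1 i2 j1 j2 -> Y \in D4 i1 i2 j1 j2 ->
  (forall z, Pv Y z = Pv X z) -> exists t, Y = mv X (false, t.1.1, t.1.2, t.2).
Proof.
case: X => [[L1 L2] [L3 L4]]; case: Y => [[M1 M2] [M3 M4]].
rewrite !D4_mem /= => h1 h2 h3 /and4P [H1 H2 H3 H4] /and4P [G1 G2 G3 G4] H.
have i1i2 : i1 < i2 by apply: ltn_trans h3.
have j1j2 : j1 < j2 by apply: ltn_trans h2.
have j1i2 : j1 < i2 by apply: ltn_trans h3.
have E1 : M1 = L1.
  apply: aval_inj => z; move: (H z) (H (tg z i2)); rewrite /Pv !pval_tg /=.
  rewrite (inD_hi H1 i1i2) (inD_hi G1 i1i2) (inD_i H2) (inD_i G2).
  rewrite (inD_hi H3 j1i2) (inD_hi G3 j1i2) (inD_hi H4 h3) (inD_hi G4 h3) /pval /=.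
  by bcase.
subst M1.
pose s := L2.1 j2 (+) M2.1 j2.
have E3 : forall z, aval M3 z = aval L3 z (+) (s && aval L1 z).
  move=> z; move: (H z) (H (tg z j2)); rewrite /Pv !pval_tg /=.
  rewrite (inD_hi H1 h2) (inD_hi H3 j1j2) (inD_hi G3 j1j2) (inD_i H4) (inD_i G4) /pval /s /=.
  by bcase2.
have E3' : forall z, aval M3 z = aval L3 z.
  move=> z; move: (E3 z) (E3 (tg z i1)); rewrite !aval_tg (inD_hi H3 h1) (inD_hi G3 h1) (inD_i H1).
  by case: (s); bcase.
have EM3 : M3 = L3 by apply: aval_inj.
subst M3.
pose q := L4.1 i1 (+) M4.1 i1.
pose r := L2.1 i1 (+) M2.1 i1.
have E2 : forall z, aval M2 z = aval L2 z (+) (r && ~~ aval L1 z) (+) (q && aval L3 z).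
  move=> z; move: (H z) (H (tg z i1)); rewrite /Pv !pval_tg /=.
  rewrite (inD_i H1) (inD_hi H3 h1) /pval /q /r /=.
  by bcase2.
pose Nf := aadd M4 (aadd L4 (ascale q L1)).
have Z : forall z, aval Nf z = Nf.1 j1 && ~~ aval L3 z.
  apply: (Zlem H3) => z; move: (H z); rewrite /Pv /pval /Nf /= E2 !(avalD, avalZ).
  by case: (r); case: (q); bcase.
exists (Nf.1 j1, q, r); rewrite /mv /=.
congr ((_, _), (_, _)).
- by apply: aval_inj => z; rewrite E2 !(avalD, avalZ, aval1); case: (r); case: (q); bcase.
- by apply: aval_inj => z; rewrite !(avalD, avalZ); bcase.
- apply: aval_inj => z; move: (Z z); set p := Nf.1 j1; rewrite /Nf !(avalD, avalZ, aval1).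
  by case: (p); case: (q); bcase.
Qed.

Lemma rec_a0 (i1 i2 j1 j2 : 'I_m) (X Y : T4) : j1 < j2 -> j2 < i1 -> i1 < i2 ->
  X \in D4 i1 i2 j1 j2 -> Y \in D4 i1 i2 j1 j2 ->
  (forall z, Pv Y z = Pv X z) -> exists t, Y = mv X (false, t.1, false, t.2).
Proof.
case: X => [[L1 L2] [L3 L4]]; case: Y => [[M1 M2] [M3 M4]].
move=> h1 h2 h3 HX HY; move: (HX) (HY).
rewrite !D4_mem /= => /and4P [H1 H2 H3 H4] /and4P [G1 G2 G3 G4] H.
have j2i2 : j2 < i2 by apply: ltn_trans h3.
have j1i1 : j1 < i1 by apply: ltn_trans h2.
have j1i2 : j1 < i2 by apply: ltn_trans j2i2.
have E1 : M1 = L1.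
  apply: aval_inj => z; move: (H z) (H (tg z i2)); rewrite /Pv !pval_tg /=.
  rewrite (inD_hi H1 h3) (inD_hi G1 h3) (inD_i H2) (inD_i G2).
  rewrite (inD_hi H3 j1i2) (inD_hi G3 j1i2) (inD_hi H4 j2i2) (inD_hi G4 j2i2) /pval /=.
  by bcase.
subst M1.
pose r := L2.1 i1 (+) M2.1 i1.
have E2 : forall z, aval M2 z = aval L2 z (+) (r && ~~ aval L1 z).
  move=> z; move: (H z) (H (tg z i1)); rewrite /Pv !pval_tg /=.
  rewrite (inD_i H1) (inD_hi H3 j1i1) (inD_hi G3 j1i1) (inD_hi H4 h2) (inD_hi G4 h2) /pval /r /=.
  by bcase2.
have G : forall z, pval (M3, M4) z = pval (L3, L4) z.
  move=> z; move: (H z); rewrite /Pv /pval /= E2.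
  by case: (r); bcase.
have D3 : (L3, L4) \in D2 j1 j2 by rewrite inD_mem /= H3 H4.
have D3' : (M3, M4) \in D2 j1 j2 by rewrite inD_mem /= G3 G4.
have [p Ep] := rec2 h1 D3 D3' G.
case: Ep => -> ->.
exists (p, r); rewrite /mv /=.
congr ((_, _), (_, _)).
- by apply: aval_inj => z; rewrite E2 !(avalD, avalZ, aval1); case: (r); bcase.
- by apply: aval_inj => z; rewrite !(avalD, avalZ); bcase.
- by apply: aval_inj => z; rewrite !(avalD, avalZ, aval1); case: (p); bcase.
Qed.

End Fib.


Lemma card_fibers (T U : finType) (D : {set T}) (f : T -> U) n :
  (forall x, x \in D -> #|[set y in D | f y == f x]| = n) -> #|D| = #|f @: D| * n.
Proof.
move=> H; rewrite -sum1_card (partition_big_imset f) /=.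
rewrite -sum_nat_const; apply: eq_bigr => u /imsetP [x Hx ->].
by rewrite sum1dep_card -(H x Hx); apply: eq_card => y; rewrite !inE.
Qed.

Section Fib2.
Variable m : nat.
Local Notation Aff := (Aff m).
Local Notation T4 := (T4 m).

Lemma Pfun_eq (X Y : T4) : (Pfun Y == Pfun X) = [forall z, Pv Y z == Pv X z].
Proof.
apply/eqP/forallP => [E z|E]; first by move/ffunP: E => /(_ z); rewrite !ffunE => ->.
by apply/ffunP => z; rewrite !ffunE; apply/eqP.
Qed.

Lemma fib_a2 (i1 i2 j1 j2 : 'I_m) (X : T4) : i1 < j1 -> j1 < j2 -> j2 < i2 ->
  X \in D4 i1 i2 j1 j2 -> #|[set Y in D4 i1 i2 j1 j2 | Pfun Y == Pfun X]| = 2 ^ 4.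
Proof.
move=> h1 h2 h3 HX.
have i1j2 : i1 < j2 by apply: ltn_trans h2.
have i1i2 : i1 < i2 by apply: ltn_trans h3.
have -> : [set Y in D4 i1 i2 j1 j2 | Pfun Y == Pfun X] = mv X @: [set: bool * bool * bool * bool].
  apply/setP => Y; rewrite inE Pfun_eq; apply/andP/imsetP.
  - case=> HY /forallP E.
    have [t ->] := rec_a2 h1 h2 h3 HX HY (fun z => eqP (E z)).
    by exists t; rewrite ?inE.
  - case=> t _ ->; split; first by apply: mv_dom => // _.
    by apply/forallP => z; rewrite Pv_mv.
rewrite card_imset; last by apply: (mv_inj HX); rewrite neq_ltn h1.
by rewrite cardsT !card_prod card_bool.
Qed.

Lemma fib_a1 (i1 i2 j1 j2 : 'I_m) (X : T4) : j1 < i1 -> i1 < j2 -> j2 < i2 ->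
  X \in D4 i1 i2 j1 j2 -> #|[set Y in D4 i1 i2 j1 j2 | Pfun Y == Pfun X]| = 2 ^ 3.
Proof.
move=> h1 h2 h3 HX.
have j1j2 : j1 < j2 by apply: ltn_trans h2.
have i1i2 : i1 < i2 by apply: ltn_trans h3.
pose g := fun t : bool * bool * bool => mv X (false, t.1.1, t.1.2, t.2).
have -> : [set Y in D4 i1 i2 j1 j2 | Pfun Y == Pfun X] = g @: [set: bool * bool * bool].
  apply/setP => Y; rewrite inE Pfun_eq; apply/andP/imsetP.
  - case=> HY /forallP E.
    have [t ->] := rec_a1 h1 h2 h3 HX HY (fun z => eqP (E z)).
    by exists t; rewrite ?inE.
  - case=> t _ ->; split; first by apply: mv_dom => // _.
    by apply/forallP => z; rewrite Pv_mv.
have hne : i1 != j1 by rewrite neq_ltn h1 orbT.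
have inj := mv_inj HX hne.
rewrite card_imset.
  by rewrite cardsT !card_prod card_bool.
move=> [[p q] r] [[p' q'] r'] /inj E.
by case: E => -> -> ->.
Qed.

Lemma fib_a0 (i1 i2 j1 j2 : 'I_m) (X : T4) : j1 < j2 -> j2 < i1 -> i1 < i2 ->
  X \in D4 i1 i2 j1 j2 -> #|[set Y in D4 i1 i2 j1 j2 | Pfun Y == Pfun X]| = 2 ^ 2.
Proof.
move=> h1 h2 h3 HX.
have j2i2 : j2 < i2 by apply: ltn_trans h3.
have j1i1 : j1 < i1 by apply: ltn_trans h2.
pose g := fun t : bool * bool => mv X (false, t.1, false, t.2).
have -> : [set Y in D4 i1 i2 j1 j2 | Pfun Y == Pfun X] = g @: [set: bool * bool].
  apply/setP => Y; rewrite inE Pfun_eq; apply/andP/imsetP.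
  - case=> HY /forallP E.
    have [t ->] := rec_a0 h1 h2 h3 HX HY (fun z => eqP (E z)).
    by exists t; rewrite ?inE.
  - case=> t _ ->; split; first by apply: mv_dom => // _.
    by apply/forallP => z; rewrite Pv_mv.
have hne : i1 != j1 by rewrite neq_ltn j1i1 orbT.
have inj := mv_inj HX hne.
rewrite card_imset.
  by rewrite cardsT !card_prod card_bool.
move=> [p r] [p' r'] /inj E.
by case: E => -> ->.
Qed.

Lemma fib2 (a b : 'I_m) (X : Aff * Aff) : a < b -> X \in D2 a b ->
  #|[set Y in D2 a b | prodf Y == prodf X]| = 2.
Proof.
move=> ab HX.
have -> : [set Y in D2 a b | prodf Y == prodf X] = mv2 X @: [set: bool].
  apply/setP => Y; rewrite inE; apply/andP/imsetP.
  - case=> HY /eqP E.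
    have Ez : forall z, pval Y z = pval X z.
      by move=> z; move/ffunP: E => /(_ z); rewrite !ffunE.
    have [r ->] := rec2 ab HX HY Ez.
    by exists r.
  - case=> r _ ->; split; last by apply/eqP/ffunP => z; rewrite !ffunE pval_mv2.
    move: HX; rewrite !inD_mem /= => /andP [H1 H2]; rewrite H1 /=.
    apply: inD_add => //; case: r; last by apply: low_scale0.
    by apply: low_scale; apply: low_add; [apply: inD_low H1 ab | apply: low_one].
by rewrite card_imset ?cardsT ?card_bool //; apply: (mv2_inj HX).
Qed.

End Fib2.


Section Orb.
Variable m : nat.
Local Notation Aff := (Aff m).
Local Notation T4 := (T4 m).

Definition rowform (B : 'M['F_2]_m) (e : 'rV['F_2]_m) (i : 'I_m) : Aff :=
  ([ffun j : 'I_m => (j == i) (+) ((j < i) && (B i j == 1%R))], e ord0 i == 1%R).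

Lemma evx_lta_var B e i x : evx x (lta_var B e i) = aval (rowform B e i) x.
Proof.
rewrite /lta_var !evx_radd evx_var evx_const evx_big /aval /=.
rewrite [X in _ = _ (+) X](eq_bigr (fun j => (j == i) (+) ((j < i) && (B i j == 1%R)))); last by move=> j _; rewrite ffunE.
rewrite big_split /=.
have -> : \big[addb/false]_(j in x) (j == i) = (i \in x).
  case: (boolP (i \in x)) => Hi.
    rewrite (big_setD1 _ Hi) eqxx big1 // => j; rewrite !inE => /andP [H _].
    by apply/negbTE.
  by rewrite big1 // => j Hj; apply/negbTE; apply: contraNneq Hi => <-.
have -> : \big[addb/false]_(j in x) ((j < i) && (B i j == 1%R)) =
          \big[addb/false]_(j < m | j < i) evx x (rmul (rconst m (B i j)) (rvar j)).
  rewrite big_mkcond [RHS]big_mkcond; apply: eq_bigr => j _.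
  rewrite evx_rmul evx_const evx_var.
  by case: (j \in x); case: (j < i); case: (B i j == 1%R).
by case: (i \in x); case: (e ord0 i == 1%R);
  case: (\big[addb/false]_(j < m | j < i) evx x (rmul (rconst m (B i j)) (rvar j))).
Qed.

Lemma evx_act B e (a b : 'I_m) x : a != b ->
  evx x (lta_act B e (mono2 a b)) = pval (rowform B e a, rowform B e b) x.
Proof.
move=> ab; rewrite /lta_act evx_bigmul /mono2 big_setU1 ?big_set1 /pval /= ?evx_lta_var //.
by rewrite inE.
Qed.

Lemma rowform_inD B e i : inD i (rowform B e i).
Proof.
apply/forallP => j; apply/implyP => Hj; rewrite ffunE.
by rewrite ltnNge Hj /= addbF.
Qed.

Lemma orbit_sub (a b : 'I_m) p : a != b -> p \in lta_orbit (mono2 a b) ->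
  exists2 X, X \in D2 a b & ev p = prodf X.
Proof.
move=> ab /imsetP [BE _ ->].
exists (rowform BE.1 BE.2 a, rowform BE.1 BE.2 b).
  by rewrite inD_mem /= !rowform_inD.
by apply/ffunP => x; rewrite !ffunE evx_act.
Qed.

Lemma ord_ltF (j a : 'I_m) : j < a -> (j == a) = false.
Proof. by move=> h; apply/negbTE; rewrite neq_ltn h. Qed.
Lemma ord_gtF (j a : 'I_m) : a < j -> (j == a) = false.
Proof. by move=> h; apply/negbTE; rewrite neq_ltn h orbT. Qed.

Lemma F2b (c : bool) : (((c%:R)%R : 'F_2) == 1%R) = c.
Proof. by case: c. Qed.

Lemma orbit_sup (a b : 'I_m) (X : Aff * Aff) : a != b -> X \in D2 a b ->
  exists2 p, p \in lta_orbit (mono2 a b) & ev p = prodf X.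
Proof.
case: X => L1 L2 ab; rewrite inD_mem /= => /andP [H1 H2].
pose B : 'M['F_2]_m := (\matrix_(i, j) (if j == i then 1 else
   (((j < i)%N && (if i == a then L1.1 j else if i == b then L2.1 j else false))%:R)))%R.
pose e : 'rV['F_2]_m := (\row_i ((if i == a then L1.2 else if i == b then L2.2 else false)%:R))%R.
have R1 : rowform B e a = (L1.1, L1.2).
  rewrite /rowform; congr pair.
    apply/ffunP => j; rewrite !ffunE !mxE eqxx.
    case: (ltngtP j a) => h.
    - by rewrite (ord_ltF h) /= F2b.
    - by rewrite (ord_gtF h) /= (inD_hi H1 h).
    - by move/val_inj: h => h; subst j; rewrite eqxx ?ltnn /= (inD_i H1).
  by rewrite mxE eqxx F2b.
have ba : (b == a) = false by apply/negbTE; rewrite eq_sym.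
have R2 : rowform B e b = (L2.1, L2.2).
  rewrite /rowform; congr pair.
    apply/ffunP => j; rewrite !ffunE !mxE eqxx ba.
    case: (ltngtP j b) => h.
    - by rewrite (ord_ltF h) /= F2b.
    - by rewrite (ord_gtF h) /= (inD_hi H2 h).
    - by move/val_inj: h => h; subst j; rewrite eqxx ?ltnn /= (inD_i H2).
  by rewrite mxE eqxx ba F2b.
exists (lta_act B e (mono2 a b)).
  apply/imsetP; exists (B, e) => //; rewrite inE /=; apply/andP; split.
    by apply/forallP => i; rewrite mxE eqxx.
  apply/forallP => i; apply/forallP => j; apply/implyP => h.
  by rewrite mxE (ord_gtF h) ltnNge (ltnW h).
by apply/ffunP => x; rewrite !ffunE evx_act // R1 R2.
Qed.

End Orb.


Import GRing.Theory Num.Theory.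

Section Img.
Variable m : nat.

Lemma img_orbit (a b : 'I_m) : a != b ->
  [set ev p | p in lta_orbit (mono2 a b)] = [set prodf X | X in D2 a b].
Proof.
move=> ab; apply/setP => F; apply/imsetP/imsetP.
- by case=> p Hp ->; have [X HX E] := orbit_sub ab Hp; exists X.
- by case=> X HX ->; have [p Hp E] := orbit_sup ab HX; exists p.
Qed.

Lemma img_sumset (i1 i2 j1 j2 : 'I_m) : i1 != i2 -> j1 != j2 ->
  [set ev p | p in sumset (lta_orbit (mono2 i1 i2)) (lta_orbit (mono2 j1 j2))]
  = [set Pfun X | X in D4 i1 i2 j1 j2].
Proof.
move=> hi hj; apply/setP => F; apply/imsetP/imsetP.
- case=> q /imsetP [st]; rewrite inE => /andP [S1 S2] -> ->.
  have [X1 HX1 E1] := orbit_sub hi S1.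
  have [X2 HX2 E2] := orbit_sub hj S2.
  exists (X1, X2); first by rewrite /D4 inE /= HX1 HX2.
  apply/ffunP => z; rewrite !ffunE evx_radd /Pv /=.
  move/ffunP: E1 => /(_ z); rewrite !ffunE => ->.
  by move/ffunP: E2 => /(_ z); rewrite !ffunE => ->.
- case=> [[X1 X2]]; rewrite /D4 inE /= => /andP [HX1 HX2] ->.
  have [p1 Hp1 E1] := orbit_sup hi HX1.
  have [p2 Hp2 E2] := orbit_sup hj HX2.
  exists (radd p1 p2).
    by apply/imsetP; exists (p1, p2); rewrite // inE /= Hp1 Hp2.
  apply/ffunP => z; rewrite !ffunE evx_radd /Pv /=.
  move/ffunP: E1 => /(_ z); rewrite !ffunE => ->.
  by move/ffunP: E2 => /(_ z); rewrite !ffunE => ->.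
Qed.

End Img.

Unset Implicit Arguments.

Lemma arith (S A B k : nat) : S * 2 ^ (k + 2) = A * 2 * (B * 2) -> S * 2 ^ k = A * B.
Proof. by rewrite expnD mulnA mulnACA => /eqP; rewrite eqn_pmul2r // => /eqP. Qed.

Theorem proposition1 (m : nat) (hm : 1 <= m) (I : {set monom m})
  (hI : decreasing I) (i1 i2 j1 j2 : 'I_m)
  (hi : i1 < i2) (hj : j1 < j2)
  (hgcd : mgcd (mono2 i1 i2) (mono2 j1 j2) = set0)
  (hij : j2 < i2) :
  (#|sumset (lta_orbit (mono2 i1 i2)) (lta_orbit (mono2 j1 j2))|%:R : rat)
  = ((#|lta_orbit (mono2 i1 i2)| * #|lta_orbit (mono2 j1 j2)|)%:R
      / (2 ^ alpha i1 i2 j1 j2)%:R)%R.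
Proof.
have hi' : i1 != i2 by rewrite neq_ltn hi.
have hj' : j1 != j2 by rewrite neq_ltn hj.
have n11 : i1 != j1.
  apply/eqP => E; subst j1; move/setP: hgcd => /(_ i1).
  by rewrite /mgcd /mono2 !inE !eqxx.
have n12 : i1 != j2.
  apply/eqP => E; subst j2; move/setP: hgcd => /(_ i1).
  by rewrite /mgcd /mono2 !inE !eqxx !orbT.
set S := sumset _ _.
have cS : #|S| = #|[set Pfun X | X in D4 i1 i2 j1 j2]|.
  by rewrite -img_sumset // (card_imset _ (@ev_inj m)).
have cA : #|lta_orbit (mono2 i1 i2)| = #|[set prodf X | X in D2 i1 i2]|.
  by rewrite -img_orbit // (card_imset _ (@ev_inj m)).
have cB : #|lta_orbit (mono2 j1 j2)| = #|[set prodf X | X in D2 j1 j2]|.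
  by rewrite -img_orbit // (card_imset _ (@ev_inj m)).
have fA := card_fibers (fun X HX => fib2 hi HX).
have fB := card_fibers (fun X HX => fib2 hj HX).
have D4c : #|D4 i1 i2 j1 j2| = #|D2 i1 i2| * #|D2 j1 j2| by rewrite /D4 cardsX.
suff key : #|S| * 2 ^ alpha i1 i2 j1 j2 = #|lta_orbit (mono2 i1 i2)| * #|lta_orbit (mono2 j1 j2)|.
  by rewrite -key natrM mulfK // pnatr_eq0 expn_eq0.
rewrite cS cA cB.
move: D4c; rewrite fA fB.
case: (ltnP j2 i1) => h2.
  have fD := card_fibers (fun X HX => fib_a0 hj h2 hi HX).
  rewrite fD /alpha h2 /=; exact: (@arith _ _ _ 0).
have h2' : i1 < j2 by rewrite ltn_neqAle n12 h2.
case: (ltnP j1 i1) => h1.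
  have fD := card_fibers (fun X HX => fib_a1 h1 h2' hij HX).
  rewrite fD /alpha ltnNge h2 /= h1; exact: (@arith _ _ _ 1).
have h1' : i1 < j1 by rewrite ltn_neqAle n11 h1.
have fD := card_fibers (fun X HX => fib_a2 h1' hj hij HX).
rewrite fD /alpha ltnNge h2 /= ltnNge h1 /=; exact: (@arith _ _ _ 2).
Qed.
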